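(* Let $d\ge1$, put $r=\lfloor (d-1)/2\rfloor$, and let $N=-1$ if $d$ is even and $N=r$ if $d$ is odd. Then the numbers $h^{(d)}_{i,j}$ increase weakly along the following chain: for each $0\le i\le r$, $h^{(d)}_{i,d}\le h^{(d)}_{i,d-1}\le\cdots\le h^{(d)}_{i,-1}$ (for $i<r$), and $h^{(d)}_{i,-1}\le h^{(d)}_{i+1,d}$ for $0\le i<r$, while the last segment is $h^{(d)}_{r,d}\le h^{(d)}_{r,d-1}\le\cdots\le h^{(d)}_{r,N}$. That is, $$h^{(d)}_{0,d}\le\cdots\le h^{(d)}_{0,-1}\le h^{(d)}_{1,d}\le\cdots\le h^{(d)}_{1,-1}\le\cdots\le h^{(d)}_{r,d}\le\cdots\le h^{(d)}_{r,N}.$$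
   Context: For $m\ge1$ and a permutation $\sigma$ of $[m]=\{1,\dots,m\}$, $\mathrm{des}(\sigma)$ is the number of $1\le t\le m-1$ with $\sigma(t)>\sigma(t+1)$; $A(m,i,j)$ is the number of permutations $\sigma$ of $[m]$ with $\mathrm{des}(\sigma)=i$ and $\sigma(1)=j$ (and $A(m,i,j)=0$ if $i<0$). For $d\ge0$ and $-1\le i,j\le d$ define $h^{(d)}_{i,j}=A(d+2,i+1,j+2)$. *)

(* Defs.v *)
From HB Require Import structures.
From mathcomp Require Import all_boot all_order all_algebra all_fingroup.
Set Implicit Arguments. Unset Strict Implicit. Unset Printing Implicit Defensive.
Import Order.TTheory GRing.Theory Num.Theory.

(* A permutation sigma of [m] = {1..m} is modelled by s : 'S_m acting on
   {0..m-1}; its one-line word is sigma(t+1) = (s t) + 1. *)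
Definition perm_word (m : nat) (s : 'S_m) : seq nat :=
  [seq (s i : nat).+1 | i : 'I_m].

Definition des (m : nat) (s : 'S_m) : nat :=
  \sum_(t < m.-1) (nth 0 (perm_word s) t.+1 < nth 0 (perm_word s) t).

Definition Aperm (m : nat) (i : int) (j : nat) : nat :=
  if (i < 0)%R then 0%N
  else #|[set s : 'S_m | (des s == `|i|%N) && (head 0%N (perm_word s) == j)]|.

Definition h (d : nat) (i j : int) : nat :=
  Aperm d.+2 (i + 1)%R `|(j + 2)%R|%N.

(* Main.v *)
Require Import Defs.
From HB Require Import structures.
From mathcomp Require Import all_boot all_order all_algebra all_fingroup.
From mathcomp Require Import zify.
Import Order.TTheory GRing.Theory Num.Theory.

Lemma word_nth n (s : 'S_n.+1) t : t < n.+1 ->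
  nth 0 (perm_word s) t = (s (inord t)).+1.
Proof.
move=> Ht; rewrite /perm_word /image_mem (nth_map ord0); last by rewrite size_enum_ord.
congr (_.+1); congr (nat_of_ord (s _)); apply: val_inj.
by rewrite /= nth_enum_ord // inordK.
Qed.

Lemma des_eq n (s : 'S_n.+1) :
  des s = \sum_(t < n) (s (inord t.+1) < s (inord t)).
Proof.
rewrite /des /=; apply: eq_bigr => t _.
rewrite !word_nth ?ltnS //; by [apply: ltnW | ].
Qed.

Lemma head_eq n (s : 'S_n.+1) : head 0 (perm_word s) = (s ord0).+1.
Proof.
rewrite -nth0 word_nth //; congr (_.+1); congr (nat_of_ord (s _)); apply: val_inj.
by rewrite /= inordK.
Qed.

Lemma des_lift n (j0 : 'I_n.+2) (t : 'S_n.+1) :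
  des (lift_perm ord0 j0 t) = des t + (t ord0 < j0).
Proof.
rewrite !des_eq big_ord_recl addnC; congr (_ + _).
- apply: eq_bigr => i _.
  have E : forall k : nat, k < n.+1 ->
      (inord k.+1 : 'I_n.+2) = lift ord0 (inord k : 'I_n.+1).
    by move=> k Hk; apply: val_inj; rewrite /= /bump /= add1n !inordK.
  have Hl : (lift ord0 i : nat) = i.+1 by rewrite /= /bump add1n.
  have Hi := ltn_ord i.
  rewrite Hl (E i.+1); last by [].
  rewrite (E i); last by apply: ltnW.
  rewrite !lift_perm_lift /= /bump.
  move: (t (inord i.+1)) (t (inord i)) => a b.
  by case: leqP; case: leqP; lia.
- have E1 : forall x : nat, x = 0 -> (inord x.+1 : 'I_n.+2) = lift ord0 (ord0 : 'I_n.+1).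
    by move=> x ->; apply: val_inj; rewrite /= inordK.
  have E0 : forall x : nat, x = 0 -> (inord x : 'I_n.+2) = ord0.
    by move=> x ->; apply: val_inj; rewrite /= inordK.
  rewrite E1 // E0 // lift_perm_lift lift_perm_id /= /bump.
  case: leqP => H /=; lia.
Qed.


Definition cnt n (k j : nat) : nat :=
  \sum_(s : 'S_n.+1) ((des s == k) && (s ord0 == j :> nat)).

Lemma Aperm_cnt n k j : Aperm n.+1 (Posz k) j.+1 = cnt n k j.
Proof.
rewrite /Aperm /= -sum1dep_card big_mkcond /cnt; apply: eq_bigr => s _.
by rewrite head_eq eqSS; case: (_ && _).
Qed.

Lemma cnt_step n k j : j < n.+2 ->
  cnt n.+1 k j = \sum_(t : 'S_n.+1) (des t + (t ord0 < j) == k).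
Proof.
move=> Hj.
pose f (p : 'I_n.+2 * 'S_n.+1) : 'S_n.+2 := lift_perm ord0 p.1 p.2.
have finj : injective f.
  move=> [a s] [b t]; rewrite /f /= => E.
  have Eab : a = b by move: (congr1 (fun u : 'S_n.+2 => u ord0) E); rewrite !lift_perm_id.
  subst b; congr (_, _); apply/permP => x.
  move: (congr1 (fun u : 'S_n.+2 => u (lift ord0 x)) E); rewrite /= !lift_perm_lift.
  exact: lift_inj.
have fbij : bijective f.
  apply: inj_card_bij => //.
  by rewrite card_prod card_ord !card_Sn factS.
rewrite /cnt (reindex f); last exact: onW_bij.
rewrite (_ : \sum_(p : 'I_n.+2 * 'S_n.+1) _ =
  \sum_(a : 'I_n.+2) \sum_(t : 'S_n.+1) ((des (f (a, t)) == k) && (f (a, t) ord0 == j :> nat))); last first.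
  by rewrite pair_bigA; apply: eq_bigr => -[a t].
rewrite exchange_big /=; apply: eq_bigr => t _.
rewrite (bigD1 (Ordinal Hj)) //= big1 ?addn0.
  by rewrite /f /= lift_perm_id des_lift eqxx andbT.
move=> a Ha; rewrite /f /= lift_perm_id.
have -> : (a == j :> nat) = false by apply/negP => /eqP E; case/eqP: Ha; exact: val_inj.
by rewrite andbF.
Qed.

Lemma cnt_split n k j :
  \sum_(t : 'S_n.+1) (des t + (t ord0 < j) == k) =
  \sum_(l < n.+1) (if l < j then (if k is k'.+1 then cnt n k' l else 0) else cnt n k l).
Proof.
have -> : \sum_(t : 'S_n.+1) (des t + (t ord0 < j) == k) =
  \sum_(t : 'S_n.+1) \sum_(l < n.+1) ((t ord0 == l) && (des t + (l < j) == k)).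
  apply: eq_bigr => t _.
  rewrite (bigD1 (t ord0)) //= eqxx big1 ?addn0 //.
  by move=> l Hl; rewrite eq_sym (negbTE Hl).
rewrite exchange_big /=; apply: eq_bigr => l _.
rewrite /cnt; case: (l < j) => /=.
- case: k => [|k'] /=.
    by rewrite big1 // => t _; rewrite addn1 andbF.
  by apply: eq_bigr => t _; rewrite addn1 eqSS andbC.
- by apply: eq_bigr => t _; rewrite addn0 andbC.
Qed.


Lemma cnt_base k : cnt 0 k 0 = (k == 0).
Proof.
rewrite /cnt (eq_bigr (fun _ => (k == 0) : nat)).
  by rewrite sum_nat_const card_Sn /= mul1n.
move=> s _; rewrite /des big_ord0 eq_sym.
by case: (s ord0) => -[|//] ? /=; rewrite andbT.
Qed.

Local Open Scope ring_scope.

Lemma Posz_sum (I : Type) (r : seq I) (P : pred I) (F : I -> nat) :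
  Posz (\sum_(i <- r | P i) F i)%N = \sum_(i <- r | P i) Posz (F i).
Proof. by rewrite (big_morph Posz PoszD (erefl _)). Qed.

Definition Cz n (k : int) (j : nat) : int := (Aperm n.+1 k j.+1)%:Z.

Lemma Cz_neg n k j : k < 0 -> Cz n k j = 0.
Proof. by move=> H; rewrite /Cz /Aperm H. Qed.

Lemma Cz_pos n (k : nat) j : Cz n k j = (cnt n k j)%:Z.
Proof. by rewrite /Cz Aperm_cnt. Qed.

Lemma Cz_ge0 n k j : 0 <= Cz n k j.
Proof. by []. Qed.

Lemma Cz_base k : Cz 0 k 0 = (k == 0)%:R.
Proof.
case: k => [k|k]; last by rewrite Cz_neg.
by rewrite Cz_pos cnt_base; case: k.
Qed.

Lemma Cz_rec n k j : (j < n.+2)%N ->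
  Cz n.+1 k j = \sum_(l < j) Cz n (k - 1) l + \sum_(j <= l < n.+1) Cz n k l.
Proof.
move=> Hj; case: k => [k|k]; last first.
  rewrite Cz_neg // !big1 ?addr0 // => l _; apply: Cz_neg; lia.
rewrite Cz_pos cnt_step // cnt_split Posz_sum.
rewrite -(big_mkord xpredT (fun l => Posz (if (l < j)%N then (match k with 0%N => 0%N | k2.+1 => cnt n k2 l end) else cnt n k l))) /=.
rewrite (@big_cat_nat _ _ _ j 0 n.+1) /=; last by rewrite -ltnS. 2: by [].
rewrite big_mkord; congr (_ + _).
- apply: eq_bigr => l _; rewrite (ltn_ord l).
  case: k => [|k] /=; first by rewrite Cz_neg.
  have -> : ((k.+1)%:Z - 1 = k%:Z)%R by lia.
  by rewrite Cz_pos.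
- rewrite [LHS]big_nat_cond [RHS]big_nat_cond.
  apply: eq_big => [l|l /andP[/andP[Hl _] _]] //.
  by rewrite ltnNge Hl /= Cz_pos.
Qed.

Local Open Scope ring_scope.

Lemma Cz_rec2 n k j : (j < n.+2)%N ->
  Cz n.+1 k j = \sum_(l < n.+1) (if (l < j)%N then Cz n (k - 1) l else Cz n k l).
Proof.
move=> Hj; rewrite Cz_rec //.
rewrite -(big_mkord xpredT (fun l => if (l < j)%N then Cz n (k - 1) l else Cz n k l)).
rewrite (@big_cat_nat _ _ _ j 0 n.+1) //=; try lia.
rewrite big_mkord; congr (_ + _).
- by apply: eq_bigr => l _; rewrite (ltn_ord l).
- rewrite [LHS]big_nat_cond [RHS]big_nat_cond.
  apply: eq_big => [l|l /andP[/andP[Hl _] _]] //.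
  by rewrite ltnNge Hl.
Qed.

Lemma rev_sum n (F : nat -> int) :
  \sum_(l < n.+1) F l = \sum_(l < n.+1) F (n - l)%N.
Proof.
rewrite (reindex_inj rev_ord_inj) /=; apply: eq_bigr => i _.
by rewrite subSS.
Qed.

Lemma Cz_sym n k j : (j < n.+1)%N -> Cz n k j = Cz n (n%:Z - k) (n - j)%N.
Proof.
elim: n k j => [|n IH] k j Hj.
  have -> : j = 0%N by lia.
  by rewrite !Cz_base sub0r oppr_eq0.
rewrite Cz_rec2 // Cz_rec2; last by lia.
rewrite [RHS](rev_sum n (fun l => if (l < n.+1 - j)%N then Cz n (n.+1%:Z - k - 1) l else Cz n (n.+1%:Z - k) l)); apply: eq_bigr => l _.
have Hl := ltn_ord l.
have -> : (n - l < n.+1 - j)%N = ~~ (l < j)%N by lia.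
case: (l < j)%N => /=.
- rewrite (IH (k - 1) l) //; congr Cz; lia.
- rewrite (IH k l) //; congr Cz; lia.
Qed.

Definition D n k j := Cz n k j - Cz n (k - 1) j.

Lemma D_rec2 n k j : (j < n.+2)%N ->
  D n.+1 k j = \sum_(l < n.+1) (if (l < j)%N then D n (k - 1) l else D n k l).
Proof.
move=> Hj; rewrite /D !Cz_rec2 // -sumrB; apply: eq_bigr => l _.
by case: ifP.
Qed.

Lemma D_anti n k j : (j < n.+1)%N -> D n k j = - D n (n.+1%:Z - k) (n - j)%N.
Proof.
move=> Hj; rewrite /D opprB (@Cz_sym n k j Hj) (@Cz_sym n (k - 1) j Hj).
congr (_ - _); congr Cz; lia.
Qed.

Lemma D0 n j : 0 <= D n 0 j.
Proof. by rewrite /D (@Cz_neg n (0 - 1) j) // subr0. Qed.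

Local Open Scope ring_scope.

Lemma split_if n (P : nat -> bool) (A B : nat -> int) :
  \sum_(l < n) (if P l then A l else B l) =
  \sum_(l < n) (if P l then A l else 0) + \sum_(l < n) (if P l then 0 else B l).
Proof.
rewrite -big_split; apply: eq_bigr => l _; case: (P l) => /=; [exact: (esym (addr0 _)) | exact: (esym (add0r _))].
Qed.

Lemma Dpos n :
  (forall k j : nat, (2 * k <= n)%N -> (j < n.+1)%N -> 0 <= D n k j) /\
  (forall p j : nat, n.+1 = (2 * p)%N -> (p <= j)%N -> (j < n.+1)%N -> 0 <= D n p j).
Proof.
elim: n => [|n [Ha Hb]].
  split; first by move=> k j Hk Hj; have -> : k = 0%N by [lia]; apply: D0.
  by move=> p j; lia.
split.
- move=> [|k] j Hk Hj; first exact: D0.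
  rewrite D_rec2 //.
  have -> : (k.+1%:Z - 1) = k%:Z by lia.
  case: (leqP (2 * k.+1) n) => Hkn.
    by apply: sumr_ge0 => l _; have := ltn_ord l; case: ifP => _; [apply: Ha | apply: Ha]; lia.
  have Hn : n.+1 = (2 * k.+1)%N by lia.
  rewrite (split_if _ (fun l => (l < j)%N) (fun l => D n k l) (fun l => D n k.+1 l)); apply: addr_ge0.
    by apply: sumr_ge0 => l _; have := ltn_ord l; case: ifP => _ //; apply: Ha; lia.
  case: (leqP k.+1 j) => Hkj.
    by apply: sumr_ge0 => l _; have := ltn_ord l; case: ifP => H //; apply: Hb; lia.
  set M := \sum_(l < n.+1) (if (j <= l)%N && (l <= n - j)%N then D n k.+1 l else 0).
  set R := \sum_(l < n.+1) (if (n - j < l)%N then D n k.+1 l else 0).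
  have -> : \sum_(l < n.+1) (if (l < j)%N then 0 else D n k.+1 l) = M + R.
    rewrite /M /R -big_split; apply: eq_bigr => l _.
    case: ifP => H1; case: ifP => H2; case: ifP => H3; rewrite /= ?addr0 ?add0r //; lia.
  have HR : 0 <= R.
    by apply: sumr_ge0 => l _; have := ltn_ord l; case: ifP => H //; apply: Hb; lia.
  have HM : M = - M.
    rewrite {1}/M (rev_sum n (fun l => if (j <= l)%N && (l <= n - j)%N then D n k.+1 l else 0)).
    rewrite /M -sumrN; apply: eq_bigr => l _.
    have Hl := ltn_ord l.
    have -> : ((j <= n - l)%N && (n - l <= n - j)%N) = ((j <= l)%N && (l <= n - j)%N).
      by apply/idP/idP => /andP [H1 H2]; apply/andP; split; lia.
    case: ifP => _; last by rewrite oppr0.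
    rewrite D_anti; last by lia.
    by congr (- D _ _ _); lia.
  lia.
- move=> [|p] j Hp Hpj Hj; first by lia.
  rewrite D_rec2 //.
  have -> : (p.+1%:Z - 1) = p%:Z by lia.
  have E : forall l : 'I_n.+1, D n p.+1 l = - D n p (n - l)%N.
    move=> l; rewrite D_anti //; congr (- D _ _ _); lia.
  rewrite (eq_bigr (fun l : 'I_n.+1 => if (l < j)%N then D n p l else - D n p (n - l)%N));
    last by move=> l _; rewrite E.
  rewrite (split_if _ (fun l => (l < j)%N) (fun l => D n p l) (fun l => - D n p (n - l)%N)).
  rewrite [X in _ + X](_ : _ = - \sum_(l < n.+1) (if (n - l < j)%N then 0 else D n p l)); last first.
    rewrite (rev_sum n (fun l => if (n - l < j)%N then 0 else D n p l)) -sumrN.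
    apply: eq_bigr => l _; have Hl := ltn_ord l.
    have -> : (n - (n - l) = l)%N by lia.
    by case: ifP => _; rewrite ?oppr0.
  rewrite -sumrB; apply: sumr_ge0 => l _; have Hl := ltn_ord l.
  have HE : 0 <= D n p l by apply: Ha; lia.
  case: ifP => H1; case: ifP => H2; rewrite ?subr0 ?subrr //; lia.
Qed.

Local Open Scope ring_scope.

Lemma Cz_swap n k j : (j < n.+1)%N ->
  Cz n.+1 k j.+1 - Cz n.+1 k j = - D n k j.
Proof.
move=> Hj; rewrite !Cz_rec // ?ltnS; last by apply: ltnW.
rewrite big_ord_recr /= (@big_ltn _ _ _ j n.+1) //= /D.
set a := \sum_(i < j) _; set b := \sum_(j.+1 <= i < n.+1) _.
lia.
Qed.

Lemma Cz_cross n k : Cz n.+1 k 0 = Cz n.+1 (k + 1) n.+1.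
Proof.
rewrite !Cz_rec // big_ord0 add0r [X in _ = _ + X]big_geq // addr0 addrK big_mkord.
by [].
Qed.

Theorem lemma2p10 (d : nat) (hd : (1 <= d)%N) :
  let r : nat := (d.-1 %/ 2)%N in
  let N : int := if odd d then r%:Z else -1 in
  (forall (i : nat) (j : int), (i <= r)%N ->
     (if (i < r)%N then -1 else N) <= j -> j + 1 <= d%:Z ->
     (h d i%:Z (j + 1) <= h d i%:Z j)%N) /\
  (forall i : nat, (i < r)%N -> (h d i%:Z (-1) <= h d i.+1%:Z d%:Z)%N).
Proof.
move=> r N; split.
- move=> i j Hir Hlow Hup.
  have Hj1 : -1 <= j by move: Hlow; rewrite /N; case: (i < r)%N; case: (odd d) => /= H; lia.
  have [J EJ] : exists J : nat, j = J%:Z - 1 by exists (absz (j + 1)); lia.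
  subst j.
  rewrite /h.
  have -> : (J%:Z - 1 + 1 + 2 = (J.+2)%:Z) by lia.
  have -> : (J%:Z - 1 + 2 = (J.+1)%:Z) by lia.
  have -> : (i%:Z + 1 = (i.+1)%:Z) by lia.
  rewrite -lez_nat.
  change (Cz d.+1 i.+1 J.+1 <= Cz d.+1 i.+1 J).
  have HJ : (J < d.+1)%N by lia.
  have := @Cz_swap d i.+1 J HJ.
  suff : 0 <= D d i.+1 J by lia.
  have [Ha Hb] := Dpos d.
  have Hr : (r = d.-1 %/ 2)%N by [].
  case: (ltnP i r) => Hi.
    by apply: Ha => //; lia.
  have Eir : i = r by lia.
  case Ho : (odd d).
    have Hm : (d %% 2 = 1)%N by rewrite modn2 Ho.
    move: Hlow; rewrite /N Ho Eir ltnn => Hlow.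
    apply: Hb => //; lia.
  have Hm : (d %% 2 = 0)%N by rewrite modn2 Ho.
  by apply: Ha => //; lia.
- move=> i Hi; rewrite /h -lez_nat.
  have -> : (-1 + 2 = (0%N.+1)%:Z) by [].
  have -> : (d%:Z + 2 = (d.+1.+1)%:Z) by lia.
  have -> : (i%:Z + 1 = (i.+1)%:Z) by lia.
  change (Cz d.+1 i.+1 0 <= Cz d.+1 (i.+1%:Z + 1) d.+1).
  by rewrite Cz_cross.
Qed.
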